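(* Let $X=[a,b]^n$ with $a<b$, let $Z_d(z,x)\in\mathbb{R}^q$ be the vector of all monomials of degree at most $d$ in $(z,x)\in\mathbb{R}^{2n}$, let $P\in\mathbb{R}^{2q\times 2q}$ be symmetric, and let $k(x,y)=\int_X N(z,x)^TPN(z,y)\,dz$ with $N(z,x)=\begin{bmatrix} Z_d(z,x)I_{S_1}(z,x)\\ Z_d(z,x)I_{S_2}(z,x)\end{bmatrix}$. Then for each $\alpha\in\{0,1\}^n$ there is a polynomial $k_\alpha$ in the $2n$ variables $(x,y)$ such that $k(x,y)=k_\alpha(x,y)$ for all $x,y\in X$ satisfying $(-1)^{\alpha_i}(x_i-y_i)\ge 0$ for all $i=1,\dots,n$.
   Context: For $z,x\in\mathbb{R}^n$ write $z\ge x$ if $z_i\ge x_i$ for all $i$. Let $S_1:=\{(z,x)\in X\times X: z\ge x\}$, $S_2:=(X\times X)\setminus S_1$, and $I_S$ denotes the indicator function of a set $S$. *)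

(* Defs.v *)
From Stdlib Require Import Reals Lra Lia List Arith Classical ClassicalEpsilon.
Import ListNotations.
From Stdlib Require Import Bool.
Open Scope R_scope.
Open Scope bool_scope.

(* Points of R^n are functions nat -> R; only coordinates 0..n-1 matter. *)
Definition inX (n : nat) (a b : R) (z : nat -> R) : Prop :=
  forall i, (i < n)%nat -> a <= z i <= b.

Definition inXb (n : nat) (a b : R) (z : nat -> R) : bool :=
  forallb (fun i => if Rle_dec a (z i) then
                      if Rle_dec (z i) b then true else false
                    else false) (seq 0 n).

Definition geb (n : nat) (z x : nat -> R) : bool :=
  forallb (fun i => if Rle_dec (x i) (z i) then true else false) (seq 0 n).

Definition I_S1 (n : nat) (a b : R) (z x : nat -> R) : R :=
  if inXb n a b z && inXb n a b x && geb n z x then 1 else 0.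
Definition I_S2 (n : nat) (a b : R) (z x : nat -> R) : R :=
  if inXb n a b z && inXb n a b x && negb (geb n z x) then 1 else 0.

(* Exponent vectors (lists of length m) of total degree <= d, each exactly once. *)
Fixpoint mons (m d : nat) : list (list nat) :=
  match m with
  | O => [[]]
  | S m' => flat_map (fun k => map (cons k) (mons m' (d - k))) (seq 0 (S d))
  end.

Fixpoint monoAux (k : nat) (w : nat -> R) (e : list nat) : R :=
  match e with
  | [] => 1
  | c :: e' => w k ^ c * monoAux (S k) w e'
  end.
Definition mono (w : nat -> R) (e : list nat) : R := monoAux 0 w e.

Definition cat2 (n : nat) (u v : nat -> R) : nat -> R :=
  fun i => if (i <? n)%nat then u i else v (i - n)%nat.

Definition qdim (n d : nat) : nat := length (mons (2 * n) d).

Definition Zd (n d : nat) (z x : nat -> R) : list R :=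
  map (mono (cat2 n z x)) (mons (2 * n) d).

Definition Nvec (n d : nat) (a b : R) (z x : nat -> R) : list R :=
  map (fun v => v * I_S1 n a b z x) (Zd n d z x) ++
  map (fun v => v * I_S2 n a b z x) (Zd n d z x).

Fixpoint fsum (m : nat) (f : nat -> R) : R :=
  match m with O => 0 | S m' => fsum m' f + f m' end.

Definition quadN (n d : nat) (a b : R) (P : nat -> nat -> R) (z x y : nat -> R) : R :=
  let N1 := Nvec n d a b z x in
  let N2 := Nvec n d a b z y in
  fsum (2 * qdim n d) (fun i =>
    fsum (2 * qdim n d) (fun j => nth i N1 0 * P i j * nth j N2 0)).

(* Total version of the one-dimensional Riemann integral
   (value 0 when f is not Riemann integrable on [a,b]). *)
Definition Rint (f : R -> R) (a b : R) : R :=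
  match excluded_middle_informative (exists _ : Riemann_integrable f a b, True) with
  | left H => RiemannInt (proj1_sig (constructive_indefinite_description _ H))
  | right _ => 0
  end.

(* Integral over [a,b]^m of F (as an iterated Riemann integral over the
   coordinates z_0, ..., z_(m-1)). *)
Fixpoint intBox (m : nat) (a b : R) (F : (nat -> R) -> R) : R :=
  match m with
  | O => F (fun _ => 0)
  | S m' => Rint (fun t => intBox m' a b
                     (fun z => F (fun i => if (i =? m')%nat then t else z i))) a b
  end.

Definition kern (n d : nat) (a b : R) (P : nat -> nat -> R) (x y : nat -> R) : R :=
  intBox n a b (fun z => quadN n d a b P z x y).

(* Polynomial given as a list of (coefficient, exponent vector) terms *)
Definition polyEval (L : list (R * list nat)) (w : nat -> R) : R :=
  fold_right (fun p acc => fst p * mono w (snd p) + acc) 0 L.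

(* Main.v *)
Require Import Defs.
From Coquelicot Require Import Coquelicot.
From Stdlib Require Import Reals List Lra Lia Arith Bool FunctionalExtensionality ClassicalEpsilon.
Import ListNotations.
Open Scope R_scope.
Inductive pe : Type :=
| PC : R -> pe | PV : nat -> pe | PA : pe -> pe -> pe | PM : pe -> pe -> pe.

Fixpoint ev (env : nat -> R) (e : pe) : R :=
  match e with
  | PC r => r | PV i => env i
  | PA p q => ev env p + ev env q | PM p q => ev env p * ev env q
  end.

Definition upd (env : nat -> R) (j : nat) (t : R) : nat -> R :=
  fun i => if (i =? j)%nat then t else env i.

Fixpoint subst (j : nat) (s e : pe) : pe :=
  match e with
  | PC r => PC r
  | PV i => if (i =? j)%nat then s else PV i
  | PA p q => PA (subst j s p) (subst j s q)
  | PM p q => PM (subst j s p) (subst j s q)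
  end.

Lemma ev_subst j s e env : ev env (subst j s e) = ev (upd env j (ev env s)) e.
Proof. induction e; simpl; try (rewrite IHe1, IHe2); try reflexivity.
  unfold upd. destruct (n =? j)%nat; reflexivity. Qed.

Fixpoint nov (j : nat) (e : pe) : bool :=
  match e with
  | PC _ => true | PV i => negb (i =? j)%nat
  | PA p q | PM p q => nov j p && nov j q
  end.

Lemma ev_nov j e env t : nov j e = true -> ev (upd env j t) e = ev env e.
Proof. induction e; cbn [nov ev]; intros H; try (apply andb_prop in H; destruct H;
   rewrite IHe1, IHe2 by assumption); try reflexivity.
  unfold upd. destruct (n =? j)%nat; simpl in *; congruence. Qed.

Fixpoint hiv (m : nat) (e : pe) : bool :=
  match e with
  | PC _ => true | PV i => (m <=? i)%nat
  | PA p q | PM p q => hiv m p && hiv m q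
  end.

Lemma hiv_nov m j e : (j < m)%nat -> hiv m e = true -> nov j e = true.
Proof. intros Hj; induction e; cbn [hiv nov ev]; intros H; try (apply andb_prop in H; destruct H;
   rewrite IHe1, IHe2 by assumption); try reflexivity.
  apply Nat.leb_le in H. apply negb_true_iff, Nat.eqb_neq. lia. Qed.

Lemma hiv_S m e : hiv (S m) e = true -> hiv m e = true.
Proof. induction e; cbn [hiv nov ev]; intros H; try (apply andb_prop in H; destruct H;
   rewrite IHe1, IHe2 by assumption); try reflexivity.
  apply Nat.leb_le in H. apply Nat.leb_le. lia. Qed.

Fixpoint H (l : list R) (t : R) : R :=
  match l with [] => 0 | c :: l' => c + t * H l' t end.

Fixpoint ladd (l1 l2 : list pe) : list pe :=
  match l1, l2 with
  | [], _ => l2 | _, [] => l1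
  | c1 :: r1, c2 :: r2 => PA c1 c2 :: ladd r1 r2
  end.

Fixpoint lmul (l1 l2 : list pe) : list pe :=
  match l1 with
  | [] => []
  | c :: r => ladd (map (PM c) l2) (PC 0 :: lmul r l2)
  end.

Lemma H_ladd env l1 l2 t : H (map (ev env) (ladd l1 l2)) t =
  H (map (ev env) l1) t + H (map (ev env) l2) t.
Proof. revert l2; induction l1; intros [|c l2]; simpl; try ring.
  rewrite IHl1. simpl. ring. Qed.

Lemma H_map_mul env c l t : H (map (ev env) (map (PM c) l)) t = ev env c * H (map (ev env) l) t.
Proof. induction l; simpl; [ring|]. rewrite IHl. ring. Qed.

Lemma H_lmul env l1 l2 t : H (map (ev env) (lmul l1 l2)) t =
  H (map (ev env) l1) t * H (map (ev env) l2) t.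
Proof. induction l1; simpl; [ring|]. rewrite H_ladd, H_map_mul. simpl. rewrite IHl1. ring. Qed.

Fixpoint coefs (j : nat) (e : pe) : list pe :=
  match e with
  | PC r => [PC r]
  | PV i => if (i =? j)%nat then [PC 0; PC 1] else [PV i]
  | PA p q => ladd (coefs j p) (coefs j q)
  | PM p q => lmul (coefs j p) (coefs j q)
  end.

Lemma coefs_ok j e env t : ev (upd env j t) e = H (map (ev env) (coefs j e)) t.
Proof. induction e; simpl.
  - ring.
  - unfold upd. destruct (n =? j)%nat; simpl; ring.
  - rewrite H_ladd, IHe1, IHe2; ring.
  - rewrite H_lmul, IHe1, IHe2; ring. Qed.

Lemma nov_ladd j l1 l2 : Forall (fun c => nov j c = true) l1 -> Forall (fun c => nov j c = true) l2 ->
  Forall (fun c => nov j c = true) (ladd l1 l2).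
Proof. revert l2; induction l1; intros [|c l2] H1 H2; simpl; auto.
  inversion H1 as [|? ? Ha Hb]; inversion H2 as [|? ? Hc Hd]; subst. constructor; auto. simpl. rewrite Ha, Hc; auto. Qed.

Lemma nov_lmul j l1 l2 : Forall (fun c => nov j c = true) l1 -> Forall (fun c => nov j c = true) l2 ->
  Forall (fun c => nov j c = true) (lmul l1 l2).
Proof. induction l1; intros H1 H2; simpl; auto. inversion H1 as [|? ? Ha Hb]; subst.
  apply nov_ladd. apply Forall_map. eapply Forall_impl; [|exact H2]. intros c Hc; simpl; rewrite Ha, Hc; auto.
  constructor; auto. Qed.

Lemma nov_coefs j e : Forall (fun c => nov j c = true) (coefs j e).
Proof. induction e; simpl; auto.
  destruct (n =? j)%nat eqn:E; constructor; auto. simpl; rewrite E; auto.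
  apply nov_ladd; auto. apply nov_lmul; auto. Qed.

Fixpoint rsc (k : nat) (l : list R) : list R :=
  match l with [] => [] | c :: l' => c * / INR k :: rsc (S k) l' end.
Fixpoint sc (k : nat) (l : list pe) : list pe :=
  match l with [] => [] | c :: l' => PM c (PC (/ INR k)) :: sc (S k) l' end.
Fixpoint hpe (j : nat) (l : list pe) : pe :=
  match l with [] => PC 0 | c :: l' => PA c (PM (PV j) (hpe j l')) end.
Definition anti (j : nat) (r : pe) : pe := hpe j (PC 0 :: sc 1 (coefs j r)).

Lemma map_sc env k l : map (ev env) (sc k l) = rsc k (map (ev env) l).
Proof. revert k; induction l; intros k; simpl; auto. rewrite IHl; auto. Qed.

Lemma nov_sc j k l : Forall (fun c => nov j c = true) l -> Forall (fun c => nov j c = true) (sc k l).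
Proof. revert k; induction l; intros k Hl; simpl; auto. inversion Hl as [|? ? Ha Hb]; subst.
  constructor; auto. simpl; rewrite Ha; auto. Qed.

Lemma ev_hpe j l env t : Forall (fun c => nov j c = true) l ->
  ev (upd env j t) (hpe j l) = H (map (ev env) l) t.
Proof. induction l; intros Hl; simpl; auto. inversion Hl as [|? ? Ha Hb]; subst.
  rewrite IHl by auto. rewrite ev_nov by auto. unfold upd. rewrite Nat.eqb_refl. ring. Qed.

Lemma ev_anti j r env t : ev (upd env j t) (anti j r) = t * H (rsc 1 (map (ev env) (coefs j r))) t.
Proof. unfold anti. rewrite ev_hpe. simpl. rewrite map_sc. ring.
  constructor; auto. apply nov_sc, nov_coefs. Qed.

Lemma is_derive_eq (f : R -> R) x l l' : is_derive f x l -> l = l' -> is_derive f x l'.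
Proof. intros; subst; auto. Qed.

Lemma H_deriv l : forall k t0, (1 <= k)%nat ->
  is_derive (fun t => t ^ k * H (rsc k l) t) t0 (t0 ^ (k - 1) * H l t0).
Proof. induction l as [|c l IH]; intros k t0 Hk; simpl.
  - eapply is_derive_ext. { intros t. symmetry. apply Rmult_0_r. }
    eapply is_derive_eq. apply is_derive_const. unfold zero; simpl. ring.
  - eapply is_derive_ext.
    { intros t. instantiate (1 := fun t => c * / INR k * t ^ k + t ^ (S k) * H (rsc (S k) l) t).
      simpl. ring. }
    eapply is_derive_eq.
    { apply (is_derive_plus (fun t => c * / INR k * t ^ k) (fun t => t ^ (S k) * H (rsc (S k) l) t)).
      - apply (is_derive_scal (fun t => t ^ k)). apply is_derive_pow. apply is_derive_id.
      - apply IH. lia. }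
    unfold plus, scal, one; simpl. unfold mult; simpl.
    assert (Hk0 : INR k <> 0) by (apply not_0_INR; lia).
    replace (S k - 1)%nat with k by lia.
    destruct k as [|k']; [lia|]. replace (S k' - 1)%nat with k' by lia. simpl pow.
    field. exact Hk0. Qed.

Lemma H_cont l t : continuous (fun t => H l t) t.
Proof. induction l; simpl.
  - apply continuous_const.
  - apply (continuous_plus (fun _ => a) (fun t => t * H l t)). apply continuous_const.
    apply (continuous_mult (fun t => t) (fun t => H l t)). apply continuous_id. auto. Qed.

Lemma anti_deriv j r env t0 :
  is_derive (fun t => ev (upd env j t) (anti j r)) t0 (ev (upd env j t0) r).
Proof. apply (is_derive_ext (fun t => t ^ 1 * H (rsc 1 (map (ev env) (coefs j r))) t)).
  { intros t. rewrite ev_anti. simpl. ring. }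
  eapply is_derive_eq. apply H_deriv. lia. rewrite coefs_ok. simpl. ring. Qed.

Lemma anti_cont j r env t0 : continuous (fun t => ev (upd env j t) r) t0.
Proof. eapply continuous_ext. { intros t. symmetry. apply coefs_ok. } apply H_cont. Qed.

Definition J (b c t : R) : R := if Rle_dec c t then if Rle_dec t b then 1 else 0 else 0.

Lemma int_term (a b k c : R) (g G : R -> R) : a <= c <= b ->
  (forall t, is_derive G t (g t)) -> (forall t, continuous g t) ->
  is_RInt (fun t => k * J b c t * g t) a b (k * (G b - G c)).
Proof. intros Hc HG Hg.
  assert (H1 : is_RInt (fun t => k * J b c t * g t) a c 0).
  { assert (H0 : is_RInt (fun _ => 0) a c 0).
    { pose proof (is_RInt_const a c 0) as H0. unfold scal in H0; simpl in H0; unfold mult in H0; simpl in H0.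
      rewrite Rmult_0_r in H0; exact H0. }
    eapply is_RInt_ext; [|exact H0].
    intros x Hx. rewrite Rmin_left, Rmax_right in Hx by lra. unfold J.
    destruct (Rle_dec c x); [lra|]. change (0 = k * 0 * g x :> R). ring. }
  assert (H2 : is_RInt (fun t => k * J b c t * g t) c b (k * (G b - G c))).
  { assert (H0 : is_RInt g c b (minus (G b) (G c))).
    { apply (is_RInt_derive G g); [intros; apply HG|intros; apply Hg]. }
    apply (is_RInt_scal _ _ _ k) in H0.
    unfold minus, plus, opp, scal in H0; simpl in H0; unfold mult in H0; simpl in H0.
    replace (k * (G b - G c)) with (k * (G b + - G c)) by ring.
    eapply is_RInt_ext; [|exact H0].
    intros x Hx. rewrite Rmin_left, Rmax_right in Hx by lra. unfold J.
    destruct (Rle_dec c x); [|lra]. destruct (Rle_dec x b); [|lra]. unfold scal; simpl; unfold mult; simpl. ring. }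
  pose proof (is_RInt_Chasles _ _ _ _ _ _ H1 H2) as H3.
  replace (k * (G b - G c)) with (plus 0 (k * (G b - G c))) by (unfold plus; simpl; ring).
  exact H3.
Qed.

Lemma Rint_is f a b v : is_RInt f a b v -> Rint f a b = v.
Proof. intros Hv. unfold Rint. destruct excluded_middle_informative as [Hx|Hn].
  - destruct (constructive_indefinite_description _ Hx) as [pr Hpr]. simpl.
    rewrite <- RInt_Reals. apply is_RInt_unique; auto.
  - exfalso; apply Hn. exact (ex_intro _ (ex_RInt_Reals_0 _ _ _ (ex_intro _ v Hv)) I). Qed.

Definition term := (R * (nat -> pe) * pe)%type.
Definition tk (t : term) := fst (fst t).
Definition tc (t : term) := snd (fst t).
Definition tq (t : term) := snd t.

Definition sumT (T : list term) (f : term -> R) : R := fold_right (fun tr acc => f tr + acc) 0 T.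

Lemma sumT_map T g f : sumT (map g T) f = sumT T (fun tr => f (g tr)).
Proof. induction T; simpl; auto. unfold sumT in *; simpl; rewrite IHT; auto. Qed.

Lemma sumT_ext T f g : (forall tr, In tr T -> f tr = g tr) -> sumT T f = sumT T g.
Proof. induction T; intros Hfg; simpl; auto. unfold sumT in *; simpl.
  rewrite Hfg by (left; auto). rewrite IHT; auto. intros; apply Hfg; right; auto. Qed.

Fixpoint indf (b : R) (m : nat) (cv : nat -> R) (z : nat -> R) : R :=
  match m with O => 1 | S m' => indf b m' cv z * J b (cv m') (z m') end.

Lemma indf_ext b m cv z z' : (forall i, (i < m)%nat -> z i = z' i) -> indf b m cv z = indf b m cv z'.
Proof. induction m; intros Hz; simpl; auto. rewrite IHm by (intros; apply Hz; lia). rewrite (Hz m) by lia. auto. Qed.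

Definition merge (m : nat) (z env : nat -> R) : nat -> R :=
  fun i => if (i <? m)%nat then z i else env i.

Definition integrand (b : R) (m : nat) (env : nat -> R) (T : list term) (z : nat -> R) : R :=
  sumT T (fun tr => tk tr * indf b m (fun i => ev env (tc tr i)) z * ev (merge m z env) (tq tr)).

Fixpoint integ (b : R) (m : nat) (c : nat -> pe) (q : pe) : pe :=
  match m with
  | O => q
  | S m' => let s := anti m' (integ b m' c q) in
            PA (subst m' (PC b) s) (PM (PC (-1)) (subst m' (c m') s))
  end.

Lemma sum_is_RInt a b (T : list term) (kk cc : term -> R) (g G : term -> R -> R) :
  (forall tr, In tr T -> a <= cc tr <= b) ->
  (forall tr t, is_derive (G tr) t (g tr t)) -> (forall tr t, continuous (g tr) t) ->
  is_RInt (fun t => sumT T (fun tr => kk tr * J b (cc tr) t * g tr t)) a b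
    (sumT T (fun tr => kk tr * (G tr b - G tr (cc tr)))).
Proof. intros Hc HG Hg. induction T as [|tr T IH].
  - simpl. pose proof (is_RInt_const a b 0) as H0. unfold scal in H0; simpl in H0; unfold mult in H0; simpl in H0.
    rewrite Rmult_0_r in H0; exact H0.
  - unfold sumT; simpl. fold (sumT T (fun tr => kk tr * (G tr b - G tr (cc tr)))).
    apply (is_RInt_plus (fun t => kk tr * J b (cc tr) t * g tr t) (fun t => sumT T (fun tr => kk tr * J b (cc tr) t * g tr t))).
    + apply int_term; auto. apply Hc; left; auto.
    + apply IH. intros; apply Hc; right; auto.
Qed.

Lemma main_int (a b : R) m : forall (T : list term) env,
  (forall tr, In tr T -> forall i, hiv m (tc tr i) = true) ->
  (forall tr, In tr T -> forall i, (i < m)%nat -> a <= ev env (tc tr i) <= b) ->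
  intBox m a b (integrand b m env T) = sumT T (fun tr => tk tr * ev env (integ b m (tc tr) (tq tr))).
Proof. induction m as [|m IH]; intros T env Hh Hb.
  - simpl. unfold integrand. apply sumT_ext. intros tr _. simpl.
    replace (merge 0 (fun _ => 0) env) with env. ring.
    apply functional_extensionality; intros i; unfold merge; simpl. destruct i; auto.
  - simpl intBox.
    set (g := fun tr : term => (tk tr * J b (ev env (tc tr m)) 0, tc tr, tq tr)).
    assert (E : forall t, intBox m a b (fun z => integrand b (S m) env T (fun i => if (i =? m)%nat then t else z i))
        = sumT T (fun tr => (tk tr * J b (ev env (tc tr m)) t) * ev (upd env m t) (integ b m (tc tr) (tq tr)))).
    { intros t.
      set (T' := map (fun tr : term => (tk tr * J b (ev env (tc tr m)) t, tc tr, tq tr)) T).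
      transitivity (intBox m a b (integrand b m (upd env m t) T')).
      { f_equal. apply functional_extensionality; intros z. unfold integrand, T'.
        rewrite sumT_map. apply sumT_ext. intros tr Htr. unfold tk, tc, tq. simpl.
        replace (fun i => ev (upd env m t) (snd (fst tr) i)) with (fun i => ev env (snd (fst tr) i)).
        2:{ apply functional_extensionality; intros i. rewrite ev_nov; auto.
            apply hiv_nov with (S m); [lia | apply Hh; auto]. }
        replace (merge (S m) (fun i => if (i =? m)%nat then t else z i) env) with (merge m z (upd env m t)).
        2:{ apply functional_extensionality; intros i. unfold merge, upd.
            destruct (i <? m)%nat eqn:E1; destruct (i <? S m)%nat eqn:E2; destruct (i =? m)%nat eqn:E3; auto;
            apply Nat.ltb_lt in E1 || apply Nat.ltb_ge in E1;
            apply Nat.ltb_lt in E2 || apply Nat.ltb_ge in E2;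
            apply Nat.eqb_eq in E3 || apply Nat.eqb_neq in E3; lia. }
        rewrite (indf_ext b m _ (fun i => if (i =? m)%nat then t else z i) z).
        2:{ intros i Hi. destruct (i =? m)%nat eqn:E3; auto. apply Nat.eqb_eq in E3; lia. }
        rewrite Nat.eqb_refl. ring. }
      rewrite IH.
      - unfold T'. rewrite sumT_map. apply sumT_ext. intros tr Htr. reflexivity.
      - unfold T'. intros tr Htr i0. apply in_map_iff in Htr. destruct Htr as [tr0 [<- Hin]].
        apply hiv_S. apply (Hh tr0 Hin).
      - unfold T'. intros tr Htr i0 Hi0. apply in_map_iff in Htr. destruct Htr as [tr0 [<- Hin]].
        unfold tc; simpl. fold (tc tr0). rewrite ev_nov. apply (Hb tr0 Hin); lia.
        apply hiv_nov with (S m); [lia | apply (Hh tr0 Hin)]. }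
    erewrite (f_equal (fun f => Rint f a b)).
    2:{ apply functional_extensionality; intros t. apply E. }
    apply Rint_is.
    replace (sumT T (fun tr => tk tr * ev env (integ b (S m) (tc tr) (tq tr)))) with
      (sumT T (fun tr => tk tr * (ev (upd env m b) (anti m (integ b m (tc tr) (tq tr)))
                 - ev (upd env m (ev env (tc tr m))) (anti m (integ b m (tc tr) (tq tr)))))).
    2:{ apply sumT_ext. intros tr _. cbn [integ]. cbn [ev]. rewrite !ev_subst. cbn [ev]. ring. }
    apply (sum_is_RInt a b T tk (fun tr => ev env (tc tr m))
             (fun tr t => ev (upd env m t) (integ b m (tc tr) (tq tr)))
             (fun tr t => ev (upd env m t) (anti m (integ b m (tc tr) (tq tr))))).
    + intros tr Htr. apply Hb; auto.
    + intros tr t. apply anti_deriv.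
    + intros tr t. apply anti_cont.
Qed.

Ltac ltbs := repeat match goal with
 | |- context [(?p <? ?q)%nat] => let E := fresh "E" in destruct (Nat.ltb_spec p q) as [E|E]
 | |- context [(?p =? ?q)%nat] => let E := fresh "E" in destruct (Nat.eqb_spec p q) as [E|E]
 end.

Definition envw (n : nat) (w : nat -> R) : nat -> R :=
  fun i => if (i <? n)%nat then 0 else if (i <? 3 * n)%nat then w (i - n)%nat else 0.

Fixpoint addexp (e f : list nat) : list nat :=
  match e, f with
  | [], _ => f | _, [] => e
  | a :: e', c :: f' => (a + c)%nat :: addexp e' f'
  end.

Lemma mono_addexp w e : forall f k, monoAux k w (addexp e f) = monoAux k w e * monoAux k w f.
Proof. induction e; intros [|c f] k; simpl; try ring. rewrite IHe, pow_add. ring. Qed.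

Lemma len_addexp e : forall f m, (length e <= m)%nat -> (length f <= m)%nat -> (length (addexp e f) <= m)%nat.
Proof. induction e; intros [|c f] m He Hf; simpl in *; auto. destruct m; [lia|].
  specialize (IHe f m). lia. Qed.

Lemma mono_unit w j : forall k, monoAux k w (repeat 0%nat j ++ [1%nat]) = w (k + j)%nat.
Proof. induction j; intros k; simpl. rewrite Nat.add_0_r. ring.
  rewrite IHj. replace (S k + j)%nat with (k + S j)%nat by lia. ring. Qed.

Definition Lmul (L1 L2 : list (R * list nat)) : list (R * list nat) :=
  flat_map (fun p => map (fun q => (fst p * fst q, addexp (snd p) (snd q))) L2) L1.

Lemma polyEval_app L1 L2 w : polyEval (L1 ++ L2) w = polyEval L1 w + polyEval L2 w.
Proof. induction L1; simpl; [ring|]. unfold polyEval in *. simpl. rewrite IHL1. ring. Qed.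

Lemma polyEval_Lmul L1 L2 w : polyEval (Lmul L1 L2) w = polyEval L1 w * polyEval L2 w.
Proof. induction L1 as [|p L1 IH]; unfold Lmul in *; simpl; [unfold polyEval; simpl; ring|].
  rewrite polyEval_app, IH. unfold polyEval at 3. simpl. fold (polyEval L1 w).
  assert (forall L, polyEval (map (fun q => (fst p * fst q, addexp (snd p) (snd q))) L) w = fst p * mono w (snd p) * polyEval L w) as HL.
  { induction L; unfold polyEval in *; simpl; [ring|]. rewrite IHL. unfold mono. rewrite mono_addexp. ring. }
  rewrite HL. unfold polyEval. simpl. ring. Qed.

Lemma pe_poly n E : exists L : list (R * list nat),
  Forall (fun t => (length (snd t) <= 2 * n)%nat) L /\ forall w, ev (envw n w) E = polyEval L w.
Proof. induction E as [r|i|E1 [L1 [H1 H1']] E2 [L2 [H2 H2']]|E1 [L1 [H1 H1']] E2 [L2 [H2 H2']]].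
  - exists [(r, [])]. split. constructor; simpl; [lia|constructor]. intros w; unfold polyEval; simpl; unfold mono; simpl; ring.
  - destruct (Nat.ltb_spec i n) as [Hi|Hi].
    + exists []. split; auto. intros w. unfold envw; simpl. ltbs; try lia; reflexivity.
    + destruct (Nat.ltb_spec i (3 * n)) as [Hi2|Hi2].
      * exists [(1, repeat 0%nat (i - n) ++ [1%nat])]. split.
        constructor; [|constructor]. simpl. rewrite length_app, repeat_length. simpl. lia.
        intros w. unfold polyEval, mono; simpl. rewrite mono_unit. unfold envw. ltbs; try lia. simpl. ring.
      * exists []. split; auto. intros w. unfold envw; simpl. ltbs; try lia; reflexivity.
  - exists (L1 ++ L2). split. apply Forall_app; auto. intros w; simpl. rewrite polyEval_app, H1', H2'; auto.
  - exists (Lmul L1 L2). split.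
    + unfold Lmul. apply Forall_flat_map. eapply Forall_impl; [|exact H1]. intros p Hp.
      apply Forall_map. eapply Forall_impl; [|exact H2]. intros q Hq. simpl. apply len_addexp; auto.
    + intros w; simpl. rewrite polyEval_Lmul, H1', H2'; auto.
Qed.

Lemma fsum_ext m f g : (forall i, (i < m)%nat -> f i = g i) -> fsum m f = fsum m g.
Proof. induction m; intros Hfg; simpl; auto. rewrite IHm by (intros; apply Hfg; lia). rewrite (Hfg m) by lia. auto. Qed.

Lemma fsum_add m k f : fsum (m + k) f = fsum m f + fsum k (fun i => f (m + i)%nat).
Proof. induction k; simpl. rewrite Nat.add_0_r; ring. rewrite Nat.add_succ_r; simpl. rewrite IHk; ring. Qed.

Lemma fsum_scal m c f : fsum m (fun i => c * f i) = c * fsum m f.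
Proof. induction m; simpl. ring. rewrite IHm; ring. Qed.

Lemma split2 (f : nat -> nat -> R) Q :
  fsum (2 * Q) (fun i => fsum (2 * Q) (fun j => f i j)) =
  fsum Q (fun i => fsum Q (fun j => f i j)) + fsum Q (fun i => fsum Q (fun j => f i (Q + j)%nat)) +
  fsum Q (fun i => fsum Q (fun j => f (Q + i)%nat j)) + fsum Q (fun i => fsum Q (fun j => f (Q + i)%nat (Q + j)%nat)).
Proof. replace (2 * Q)%nat with (Q + Q)%nat by lia. rewrite fsum_add.
  rewrite (fsum_ext _ (fun i => fsum (Q + Q) (fun j => f i j))
     (fun i => fsum Q (fun j => f i j) + fsum Q (fun j => f i (Q + j)%nat))) by (intros; apply fsum_add).
  rewrite (fsum_ext _ (fun i => fsum (Q + Q) (fun j => f (Q + i)%nat j))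
     (fun i => fsum Q (fun j => f (Q+i)%nat j) + fsum Q (fun j => f (Q+i)%nat (Q + j)%nat))) by (intros; apply fsum_add).
  assert (Hp : forall m (g h : nat -> R), fsum m (fun i => g i + h i) = fsum m g + fsum m h).
  { induction m; intros; simpl; [ring|]. rewrite IHm; ring. }
  rewrite !Hp. ring. Qed.

Lemma nth_map_mul l c : forall i, nth i (map (fun v => v * c) l) 0 = nth i l 0 * c.
Proof. induction l; intros [|i]; simpl; auto; ring. Qed.

Lemma len_Zd n d z x : length (Zd n d z x) = qdim n d.
Proof. unfold Zd, qdim. apply length_map. Qed.

Lemma nth_Nvec1 n d a b z x i : (i < qdim n d)%nat ->
  nth i (Nvec n d a b z x) 0 = nth i (Zd n d z x) 0 * I_S1 n a b z x.
Proof. intros Hi. unfold Nvec. rewrite app_nth1. apply nth_map_mul.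
  rewrite length_map, len_Zd; auto. Qed.

Lemma nth_Nvec2 n d a b z x i :
  nth (qdim n d + i) (Nvec n d a b z x) 0 = nth i (Zd n d z x) 0 * I_S2 n a b z x.
Proof. unfold Nvec. rewrite app_nth2; rewrite length_map, len_Zd. 2: lia.
  replace (qdim n d + i - qdim n d)%nat with i by lia. apply nth_map_mul. Qed.

Definition Ablk n d (P : nat -> nat -> R) z x y (o1 o2 : nat) : R :=
  fsum (qdim n d) (fun i => fsum (qdim n d) (fun j =>
     nth i (Zd n d z x) 0 * P (o1 + i)%nat (o2 + j)%nat * nth j (Zd n d z y) 0)).

Lemma quad_blocks n d a b P z x y :
  quadN n d a b P z x y =
    I_S1 n a b z x * I_S1 n a b z y * Ablk n d P z x y 0 0 +
    I_S1 n a b z x * I_S2 n a b z y * Ablk n d P z x y 0 (qdim n d) +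
    I_S2 n a b z x * I_S1 n a b z y * Ablk n d P z x y (qdim n d) 0 +
    I_S2 n a b z x * I_S2 n a b z y * Ablk n d P z x y (qdim n d) (qdim n d).
Proof. unfold quadN. cbv zeta.
  rewrite (split2 (fun i j => nth i (Nvec n d a b z x) 0 * P i j * nth j (Nvec n d a b z y) 0)).
  set (Q := qdim n d).
  assert (Hb : forall (o1 o2 : nat) (c : R) (g h : nat -> R),
     (forall i, (i < Q)%nat -> g i = nth i (Zd n d z x) 0 * (fun _ => 1) i * 1) -> True) by auto.
  unfold Ablk. fold Q.
  assert (HB : forall (c1 c2 : R) (o1 o2 : nat) (N1 N2 : nat -> R),
     (forall i, (i < Q)%nat -> N1 i = nth i (Zd n d z x) 0 * c1) ->
     (forall j, (j < Q)%nat -> N2 j = nth j (Zd n d z y) 0 * c2) ->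
     fsum Q (fun i => fsum Q (fun j => N1 i * P (o1 + i)%nat (o2 + j)%nat * N2 j)) =
     c1 * c2 * fsum Q (fun i => fsum Q (fun j => nth i (Zd n d z x) 0 * P (o1 + i)%nat (o2 + j)%nat * nth j (Zd n d z y) 0))).
  { intros c1 c2 o1 o2 N1 N2 H1 H2. rewrite <- fsum_scal. apply fsum_ext; intros i Hi.
    rewrite <- fsum_scal. apply fsum_ext; intros j Hj. rewrite H1, H2 by auto. ring. }
  rewrite <- (HB _ _ 0%nat 0%nat (fun i => nth i (Nvec n d a b z x) 0) (fun j => nth j (Nvec n d a b z y) 0)).
  rewrite <- (HB _ _ 0%nat Q (fun i => nth i (Nvec n d a b z x) 0) (fun j => nth (Q + j) (Nvec n d a b z y) 0)).
  rewrite <- (HB _ _ Q 0%nat (fun i => nth (Q + i) (Nvec n d a b z x) 0) (fun j => nth j (Nvec n d a b z y) 0)).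
  rewrite <- (HB _ _ Q Q (fun i => nth (Q + i) (Nvec n d a b z x) 0) (fun j => nth (Q + j) (Nvec n d a b z y) 0)).
  reflexivity.
  all: intros; unfold Q; rewrite ?nth_Nvec1, ?nth_Nvec2 by auto; reflexivity.
Qed.

Definition jb (b c t : R) : bool := if Rle_dec c t then if Rle_dec t b then true else false else false.

Lemma indf_forall b m cv z : indf b m cv z = if forallb (fun i => jb b (cv i) (z i)) (seq 0 m) then 1 else 0.
Proof. induction m; [reflexivity|]. cbn [indf]. rewrite IHm, seq_S, forallb_app. simpl. unfold J, jb.
  destruct (forallb _ _); destruct (Rle_dec _ _); try destruct (Rle_dec _ _); simpl; ring. Qed.

Lemma forallb_and (f g : nat -> bool) l : forallb f l && forallb g l = forallb (fun i => f i && g i) l.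
Proof. induction l; simpl; auto. rewrite <- IHl. destruct (f a), (g a), (forallb f l), (forallb g l); auto. Qed.

Lemma forallb_seq_ext (f g : nat -> bool) m : (forall i, (i < m)%nat -> f i = g i) ->
  forallb f (seq 0 m) = forallb g (seq 0 m).
Proof. intros Hfg. assert (forall l, (forall i, In i l -> f i = g i) -> forallb f l = forallb g l) as Hg.
  { induction l; intros Hl; simpl; auto. rewrite Hl, IHl; auto. intros; apply Hl; right; auto. left; auto. }
  apply Hg. intros i Hi. apply in_seq in Hi. apply Hfg; lia. Qed.

Lemma inXb_true n a b x : inX n a b x -> inXb n a b x = true.
Proof. intros Hx. unfold inXb. apply forallb_forall. intros i Hi. apply in_seq in Hi.
  destruct (Hx i) as [H1 H2]; [lia|]. destruct (Rle_dec a (x i)); [|lra]. destruct (Rle_dec (x i) b); [|lra]. auto. Qed.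

Lemma I1_eq n a b z x : inX n a b x -> I_S1 n a b z x = if inXb n a b z && geb n z x then 1 else 0.
Proof. intros Hx. unfold I_S1. rewrite (inXb_true n a b x Hx). destruct (inXb n a b z); auto. Qed.

Lemma I2_eq n a b z x : inX n a b x -> I_S2 n a b z x =
  (if inXb n a b z then 1 else 0) - (if inXb n a b z && geb n z x then 1 else 0).
Proof. intros Hx. unfold I_S2. rewrite (inXb_true n a b x Hx). destruct (inXb n a b z), (geb n z x); simpl; ring. Qed.

Lemma quad_comb n d a b P z x y : inX n a b x -> inX n a b y ->
  quadN n d a b P z x y =
   (if inXb n a b z && geb n z x && geb n z y then 1 else 0) *
     (Ablk n d P z x y 0 0 - Ablk n d P z x y 0 (qdim n d) - Ablk n d P z x y (qdim n d) 0 + Ablk n d P z x y (qdim n d) (qdim n d)) +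
   (if inXb n a b z && geb n z x then 1 else 0) * (Ablk n d P z x y 0 (qdim n d) - Ablk n d P z x y (qdim n d) (qdim n d)) +
   (if inXb n a b z && geb n z y then 1 else 0) * (Ablk n d P z x y (qdim n d) 0 - Ablk n d P z x y (qdim n d) (qdim n d)) +
   (if inXb n a b z then 1 else 0) * Ablk n d P z x y (qdim n d) (qdim n d).
Proof. intros Hx Hy. rewrite quad_blocks, !I1_eq, !I2_eq by auto.
  destruct (inXb n a b z), (geb n z x), (geb n z y); simpl; ring. Qed.

Lemma indE n a b z : (if inXb n a b z then 1 else 0) = indf b n (fun _ => a) z.
Proof. rewrite indf_forall. reflexivity. Qed.

Lemma indX n a b z (c : nat -> R) : (forall i, (i < n)%nat -> a <= c i) ->
  (if inXb n a b z && forallb (fun i => if Rle_dec (c i) (z i) then true else false) (seq 0 n) then 1 else 0)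
  = indf b n c z.
Proof. intros Hc. rewrite indf_forall. unfold inXb. rewrite forallb_and.
  rewrite (forallb_seq_ext _ (fun i => jb b (c i) (z i))). reflexivity.
  intros i Hi. specialize (Hc i Hi). unfold jb.
  destruct (Rle_dec a (z i)); destruct (Rle_dec (z i) b); destruct (Rle_dec (c i) (z i)); simpl; auto; lra. Qed.

Lemma indM n a b z (x y : nat -> R) (alpha : nat -> bool) :
  (forall i, (i < n)%nat -> a <= x i) -> (forall i, (i < n)%nat -> a <= y i) ->
  (forall i, (i < n)%nat -> 0 <= (-1) ^ (if alpha i then 1 else 0) * (x i - y i)) ->
  (if inXb n a b z && geb n z x && geb n z y then 1 else 0)
  = indf b n (fun i => if alpha i then y i else x i) z.
Proof. intros Hx Hy Ho. rewrite indf_forall. unfold inXb, geb. rewrite !forallb_and.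
  rewrite (forallb_seq_ext _ (fun i => jb b (if alpha i then y i else x i) (z i))). reflexivity.
  intros i Hi. specialize (Hx i Hi). specialize (Hy i Hi). specialize (Ho i Hi). unfold jb.
  destruct (alpha i); simpl in Ho;
  destruct (Rle_dec a (z i)); destruct (Rle_dec (z i) b); destruct (Rle_dec (x i) (z i)); destruct (Rle_dec (y i) (z i)); simpl; auto; lra. Qed.

Fixpoint powPE (p : pe) (c : nat) : pe := match c with O => PC 1 | S c' => PM p (powPE p c') end.
Fixpoint monoAuxPE (k : nat) (sg : nat -> nat) (e : list nat) : pe :=
  match e with [] => PC 1 | c :: e' => PM (powPE (PV (sg k)) c) (monoAuxPE (S k) sg e') end.
Fixpoint fsumPE (m : nat) (f : nat -> pe) : pe := match m with O => PC 0 | S m' => PA (fsumPE m' f) (f m') end.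

Lemma ev_powPE env p c : ev env (powPE p c) = ev env p ^ c.
Proof. induction c; simpl; auto. rewrite IHc; auto. Qed.

Lemma ev_fsumPE env m f : ev env (fsumPE m f) = fsum m (fun i => ev env (f i)).
Proof. induction m; simpl; auto. rewrite IHm; auto. Qed.

Lemma mono_pe w sg env e : forall k, (forall j, (k <= j < k + length e)%nat -> w j = env (sg j)) ->
  monoAux k w e = ev env (monoAuxPE k sg e).
Proof. induction e; intros k Hw; simpl; auto. rewrite ev_powPE. simpl. rewrite (Hw k) by (simpl; lia).
  rewrite IHe; auto. intros j Hj; apply Hw; simpl; lia. Qed.

Lemma mons_len m : forall d e, In e (mons m d) -> length e = m.
Proof. induction m; intros d e He; cbn [mons] in He.
  - destruct He as [<-|[]]; auto.
  - apply in_flat_map in He. destruct He as [k [_ Hk]]. apply in_map_iff in Hk.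
    destruct Hk as [e' [<- He']]. simpl. f_equal. eapply IHm; eauto. Qed.

Lemma nth_map_ev env (g : list nat -> pe) l : forall i,
  ev env (nth i (map g l) (PC 0)) = nth i (map (fun e => ev env (g e)) l) 0.
Proof. induction l; intros [|i]; simpl; auto. Qed.

Definition sy (n j : nat) : nat := if (j <? n)%nat then j else (j + n)%nat.
Definition ZP (n d : nat) (sg : nat -> nat) : list pe := map (monoAuxPE 0 sg) (mons (2 * n) d).

Definition qB n d (P : nat -> nat -> R) (o1 o2 : nat) : pe :=
  fsumPE (qdim n d) (fun i => fsumPE (qdim n d) (fun j =>
    PM (PM (nth i (ZP n d (fun j => j)) (PC 0)) (PC (P (o1 + i)%nat (o2 + j)%nat))) (nth j (ZP n d (sy n)) (PC 0)))).

Lemma ev_qB n d P o1 o2 z x y :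
  ev (merge n z (envw n (cat2 n x y))) (qB n d P o1 o2) = Ablk n d P z x y o1 o2.
Proof. unfold qB, Ablk. rewrite ev_fsumPE. apply fsum_ext; intros i Hi. rewrite ev_fsumPE.
  apply fsum_ext; intros j Hj. simpl. unfold ZP. rewrite !nth_map_ev. unfold Zd.
  f_equal; [f_equal|]; f_equal; apply map_ext_in; intros e He; symmetry; unfold mono;
  apply mono_pe; intros k Hk; rewrite (mons_len _ _ _ He) in Hk; unfold cat2, merge, envw, sy; ltbs; try lia;
  auto; f_equal; lia. Qed.

Definition negP (p : pe) : pe := PM (PC (-1)) p.

Definition Tlist n d a (P : nat -> nat -> R) (alpha : nat -> bool) : list term :=
  let Q := qdim n d in
  let cE := fun _ : nat => PC a in
  let cX := fun i => if (i <? n)%nat then PV (n + i) else PC a in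
  let cY := fun i => if (i <? n)%nat then PV (2 * n + i) else PC a in
  let cM := fun i => if (i <? n)%nat then (if alpha i then PV (2 * n + i) else PV (n + i)) else PC a in
  [(1, cM, PA (PA (qB n d P 0 0) (negP (qB n d P 0 Q))) (PA (negP (qB n d P Q 0)) (qB n d P Q Q)));
   (1, cX, PA (qB n d P 0 Q) (negP (qB n d P Q Q)));
   (1, cY, PA (qB n d P Q 0) (negP (qB n d P Q Q)));
   (1, cE, qB n d P Q Q)].

Definition mkE b n (T : list term) : pe :=
  fold_right (fun tr acc => PA (PM (PC (tk tr)) (integ b n (tc tr) (tq tr))) acc) (PC 0) T.

Lemma ev_mkE b n T env : ev env (mkE b n T) = sumT T (fun tr => tk tr * ev env (integ b n (tc tr) (tq tr))).
Proof. induction T; simpl; auto. rewrite IHT. reflexivity. Qed.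

Lemma indf_cv_ext b m cv cv' z : (forall i, (i < m)%nat -> cv i = cv' i) -> indf b m cv z = indf b m cv' z.
Proof. induction m; intros H; simpl; auto. rewrite IHm by (intros; apply H; lia). rewrite (H m) by lia. auto. Qed.

Lemma env0_x n x y i : (i < n)%nat -> envw n (cat2 n x y) (n + i) = x i.
Proof. intros Hi. unfold envw, cat2. ltbs; try lia. f_equal; lia. Qed.
Lemma env0_y n x y i : (i < n)%nat -> envw n (cat2 n x y) (2 * n + i) = y i.
Proof. intros Hi. unfold envw, cat2. ltbs; try lia. f_equal; lia. Qed.

Theorem mainTheorem5 (n d : nat) (a b : R) (P : nat -> nat -> R) :
  a < b ->
  (forall i j, (i < 2 * qdim n d)%nat -> (j < 2 * qdim n d)%nat -> P i j = P j i) ->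
  forall alpha : nat -> bool,
  exists L : list (R * list nat),
    Forall (fun t => (length (snd t) <= 2 * n)%nat) L /\
    forall x y : nat -> R,
      inX n a b x -> inX n a b y ->
      (forall i, (i < n)%nat -> 0 <= (-1) ^ (if alpha i then 1 else 0) * (x i - y i)) ->
      kern n d a b P x y = polyEval L (cat2 n x y).
Proof.
  intros Hab _ alpha.
  destruct (pe_poly n (mkE b n (Tlist n d a P alpha))) as [L [HL HL']].
  exists L. split; auto. intros x y Hx Hy Ho.
  set (env0 := envw n (cat2 n x y)).
  unfold kern.
  replace (fun z => quadN n d a b P z x y) with (integrand b n env0 (Tlist n d a P alpha)).
  2:{ apply functional_extensionality; intros z.
      rewrite quad_comb by auto.
      rewrite (indM n a b z x y alpha) by (intros i Hi; first [apply (Hx i Hi) | apply (Hy i Hi) | apply (Ho i Hi)]).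
      unfold geb. rewrite indE, (indX n a b z x), (indX n a b z y)
        by (intros i Hi; first [apply (Hx i Hi) | apply (Hy i Hi)]).
      unfold integrand, Tlist, sumT, tk, tc, tq. cbn [fold_right fst snd ev negP].
      unfold env0. rewrite !ev_qB.
      rewrite (indf_cv_ext b n (fun i => ev (envw n (cat2 n x y)) (if (i <? n)%nat then PV (n + i) else PC a)) x)
        by (intros i Hi; ltbs; try lia; apply env0_x; auto).
      rewrite (indf_cv_ext b n (fun i => ev (envw n (cat2 n x y)) (if (i <? n)%nat then PV (2 * n + i) else PC a)) y)
        by (intros i Hi; ltbs; try lia; apply env0_y; auto).
      rewrite (indf_cv_ext b n (fun i => ev (envw n (cat2 n x y)) (if (i <? n)%nat then (if alpha i then PV (2 * n + i) else PV (n + i)) else PC a)) (fun i => if alpha i then y i else x i))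
        by (intros i Hi; ltbs; try lia; destruct (alpha i); cbn [ev]; [apply env0_y | apply env0_x]; auto).
      ring. }
  rewrite main_int.
  - rewrite <- ev_mkE. apply HL'.
  - intros tr Htr i. unfold Tlist in Htr. cbv zeta in Htr. cbn [In] in Htr.
    destruct Htr as [<-|[<-|[<-|[<-|[]]]]]; unfold tc; cbn [fst snd]; ltbs; try reflexivity;
      try destruct (alpha i); cbn [hiv]; apply Nat.leb_le; lia.
  - intros tr Htr i Hi. unfold Tlist in Htr. cbv zeta in Htr. cbn [In] in Htr.
    destruct Htr as [<-|[<-|[<-|[<-|[]]]]]; unfold tc; cbn [fst snd]; ltbs; try lia;
      try destruct (alpha i); cbn [ev]; unfold env0; rewrite ?env0_x, ?env0_y by auto;
      first [apply (Hx i Hi) | apply (Hy i Hi) | lra].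
Qed.
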